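(* Let $S$ be a $\Gamma$-semiring with zero having a left unity and a right unity, and let $L$ be its left operator semiring. Let $I$ be an ideal (resp. left ideal, right ideal) of $L$ and $\lambda_I$ its characteristic function. Then $(\lambda_I)^{+}=\lambda_{I^{+}}$. Moreover, $I^{+}$ is an ideal (resp. left ideal, right ideal) of $S$.
   Context: A $\Gamma$-semiring: $S$ and $\Gamma$ are additive commutative semigroups with a map $S\times\Gamma\times S\to S$, $(a,\alpha,b)\mapsto a\alpha b$, such that $(a+b)\alpha c=a\alpha c+b\alpha c$, $a\alpha(b+c)=a\alpha b+a\alpha c$, $a(\alpha+\beta)b=a\alpha b+a\beta b$, $a\alpha(b\beta c)=(a\alpha b)\beta c$. With zero: $(S,+)$, $(\Gamma,+)$ are monoids, $0_S\alpha x=0_S=x\alpha0_S$, $x0_\Gamma y=0_S$. Left operator semiring $L$: $F$ is the free additive commutative semigroup on $S\times\Gamma$; $\sum_i(x_i,\alpha_i)\,\rho\,\sum_j(y_j,\beta_j)$ iff $\sum_ix_i\alpha_ia=\sum_jy_j\beta_ja$ for all $a\in S$; $L=F/\rho$, classes $\sum_i[x_i,\alpha_i]$, multiplication $(\sum_i[x_i,\alpha_i])(\sum_j[y_j,\beta_j])=\sum_{i,j}[x_i\alpha_iy_j,\beta_j]$. A left unity of $S$ is $\sum_i[e_i,\delta_i]\in L$ with $\sum_ie_i\delta_ia=a$ for all $a$; a right unity is a finite family $\gamma_j\in\Gamma,f_j\in S$ with $\sum_ja\gamma_jf_j=a$ for all $a$. A left ideal of $S$ is a nonempty subset $J$ closed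 under addition with $x\gamma a\in J$ for all $x\in S,\gamma\in\Gamma,a\in J$; right ideal: $a\gamma x\in J$; ideal: both. Ideals (left, right) of the semiring $L$ are defined in the usual way. For $P\subseteq L$: $P^{+}=\{a\in S:[a,\gamma]\in P\text{ for all }\gamma\in\Gamma\}$. For a fuzzy subset $\mu$ of $L$: $\mu^{+}(x)=\inf_{\gamma\in\Gamma}\mu([x,\gamma])$. $\lambda_X$ denotes the characteristic function of a set $X$. *)

(* Defs.v *)
From HB Require Import structures.
From mathcomp Require Import all_boot all_order all_algebra.
From mathcomp Require Import boolp classical_sets functions reals numfun.
Set Implicit Arguments. Unset Strict Implicit. Unset Printing Implicit Defensive.
Import GRing.Theory Num.Theory.
Local Open Scope classical_set_scope.

Record GSR := {
  gS : Type; gG : Type;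
  addS : gS -> gS -> gS; addG : gG -> gG -> gG;
  zeroS : gS; zeroG : gG;
  gop : gS -> gG -> gS -> gS;
  addSA : forall a b c, addS a (addS b c) = addS (addS a b) c;
  addSC : forall a b, addS a b = addS b a;
  addGA : forall a b c, addG a (addG b c) = addG (addG a b) c;
  addGC : forall a b, addG a b = addG b a;
  gop_addl : forall a b al c, gop (addS a b) al c = addS (gop a al c) (gop b al c);
  gop_addr : forall a al b c, gop a al (addS b c) = addS (gop a al b) (gop a al c);
  gop_addm : forall a al be b, gop a (addG al be) b = addS (gop a al b) (gop a be b);
  gopA : forall a al b be c, gop a al (gop b be c) = gop (gop a al b) be c;
  add0S : forall a, addS zeroS a = a;
  add0G : forall al, addG zeroG al = al;
  gop0l : forall al x, gop zeroS al x = zeroS;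
  gop0r : forall x al, gop x al zeroS = zeroS;
  gop0m : forall x y, gop x zeroG y = zeroS
}.

Section LeftOp.
Variable T : GSR.
Local Notation S := (gS T).
Local Notation G := (gG T).

(** Elements of the free additive commutative semigroup F on S x G:
    nonempty formal sums, represented by a head and a tail list. *)
Definition F := ((S * G) * seq (S * G))%type.
Definition Flist (u : F) : seq (S * G) := u.1 :: u.2.

Definition Feval (u : F) (a : S) : S :=
  foldr (fun p acc => addS (gop p.1 p.2 a) acc) (zeroS T) (Flist u).

Definition rho (u v : F) : Prop := forall a, Feval u a = Feval v a.

(** The left operator semiring L = F / rho, as the type of rho-classes. *)
Definition L := {P : F -> Prop | exists u, P = rho u}.
Definition cls (u : F) : L := exist _ (rho u) (ex_intro _ u erefl).
Definition rep (A : L) : F := proj1_sig (cid (proj2_sig A)).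

Definition br (x : S) (g : G) : L := cls ((x, g), [::]).

Definition addF (u v : F) : F := (u.1, u.2 ++ Flist v).
Definition mulF (u v : F) : F :=
  let l := [seq (gop p.1 p.2 q.1, q.2) | p <- Flist u, q <- Flist v] in
  (head (u.1.1, u.1.2) l, behead l).
(* head is never used as default since l is nonempty *)

Definition addL (A B : L) : L := cls (addF (rep A) (rep B)).
Definition mulL (A B : L) : L := cls (mulF (rep A) (rep B)).

Definition has_left_unity : Prop := exists u : F, forall a, Feval u a = a.
Definition has_right_unity : Prop :=
  exists s : seq (G * S), forall a,
    foldr (fun p acc => addS (gop a p.1 p.2) acc) (zeroS T) s = a.

Inductive ideal_kind := TwoSided | LeftSided | RightSided.

Definition idealL (k : ideal_kind) (I : set L) : Prop :=
  (exists A, I A) /\ (forall A B, I A -> I B -> I (addL A B)) /\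
  match k with
  | TwoSided => (forall X A, I A -> I (mulL X A)) /\ (forall X A, I A -> I (mulL A X))
  | LeftSided => forall X A, I A -> I (mulL X A)
  | RightSided => forall X A, I A -> I (mulL A X)
  end.

Definition idealS (k : ideal_kind) (J : set S) : Prop :=
  (exists a, J a) /\ (forall a b, J a -> J b -> J (addS a b)) /\
  match k with
  | TwoSided => (forall x g a, J a -> J (gop x g a)) /\ (forall x g a, J a -> J (gop a g x))
  | LeftSided => forall x g a, J a -> J (gop x g a)
  | RightSided => forall x g a, J a -> J (gop a g x)
  end.

Definition Lplus (P : set L) : set S := fun a => forall g, P (br a g).

Definition fplus (R : realType) (mu : L -> R) : S -> R :=
  fun x => inf [set mu (br x g) | g in [set: G]].

End LeftOp.

(* Main.v *)
Require Import Defs.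
From mathcomp Require Import all_boot all_order all_algebra.
From mathcomp Require Import boolp classical_sets functions reals numfun.
Local Open Scope classical_set_scope.
Local Open Scope ring_scope.
Import Order.TTheory GRing.Theory Num.Theory.

Set Implicit Arguments.
Section Aux.
Variable T : GSR.
Local Notation S := (gS T).
Local Notation G := (gG T).
Arguments Feval {T}. Arguments mulF {T}. Arguments addF {T}. Arguments rho {T}. Arguments cls {T}. Arguments rep {T}. Arguments br {T}. Arguments mulL {T}. Arguments addL {T}.

Definition evl (s : seq (S * G)) (c : S) : S :=
  foldr (fun p acc => addS (gop p.1 p.2 c) acc) (zeroS T) s.

Lemma addS0 (a : S) : addS a (zeroS T) = a.
Proof. by rewrite addSC add0S. Qed.

Lemma evl_cat s t c : evl (s ++ t) c = addS (evl s c) (evl t c).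
Proof.
elim: s => [|p s IH] /=; first by rewrite add0S.
by rewrite IH addSA.
Qed.

Lemma evl_map (p : S * G) t c :
  evl [seq (gop p.1 p.2 q.1, q.2) | q <- t] c = gop p.1 p.2 (evl t c).
Proof.
elim: t => [|q t IH] /=; first by rewrite gop0r.
by rewrite IH gop_addr gopA.
Qed.

Lemma evl_allpairs s t c :
  evl [seq (gop p.1 p.2 q.1, q.2) | p <- s, q <- t] c = evl s (evl t c).
Proof.
elim: s => [|p s IH] //=.
by rewrite evl_cat evl_map IH.
Qed.

Lemma Feval_mulF (u v : F T) c : Feval (mulF u v) c = Feval u (Feval v c).
Proof.
have -> : Feval (mulF u v) c =
  evl [seq (gop p.1 p.2 q.1, q.2) | p <- Flist u, q <- Flist v] c.
  by case: u => [[x g] s]; case: v => [[y d] t].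
by rewrite evl_allpairs.
Qed.

Lemma Feval_addF (u v : F T) c : Feval (addF u v) c = addS (Feval u c) (Feval v c).
Proof.
rewrite /Feval /addF /Flist /=.
have := evl_cat u.2 (v.1 :: v.2) c; rewrite /evl => ->.
by rewrite addSA.
Qed.

Lemma cls_eq (u v : F T) : rho u v -> cls u = cls v.
Proof.
move=> h; apply: eq_exist; apply: funext => w; apply: propext.
split=> h' a; [by rewrite -h h' | by rewrite h h'].
Qed.

Lemma repE (u : F T) c : Feval (rep (cls u)) c = Feval u c.
Proof.
rewrite /rep; case: (cid _) => w /= e.
have : rho u u by [].
by rewrite /= e => ->.
Qed.

Lemma mulL_br (x : S) g (a : S) d : mulL (br x g) (br a d) = br (gop x g a) d.
Proof.
apply: cls_eq => c; rewrite Feval_mulF !repE /Feval /=.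
by rewrite gop_addr gop0r !addS0 gopA.
Qed.

Lemma addL_br (a b : S) g : addL (br a g) (br b g) = br (addS a b) g.
Proof.
apply: cls_eq => c; rewrite Feval_addF !repE /Feval /=.
by rewrite !addS0 gop_addl.
Qed.

Lemma mulL0 (X : L T) g : mulL (br (zeroS T) g) X = br (zeroS T) g.
Proof.
apply: cls_eq => c; rewrite Feval_mulF !repE /Feval /=.
by rewrite !gop0l add0S.
Qed.

Lemma mul0L (X : L T) g : mulL X (br (zeroS T) g) = br (zeroS T) g.
Proof.
apply: cls_eq => c; rewrite Feval_mulF !repE /Feval /=.
rewrite gop0l add0S.
suff H : forall s, evl s (zeroS T) = zeroS T by exact: (H (Flist (rep X))).
elim => [|p s IH] //=.
by rewrite IH gop0r add0S.
Qed.

End Aux.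

Theorem lemma3p7 (R : realType) (T : GSR) (k : ideal_kind) (I : set (L T)) :
  has_left_unity T -> has_right_unity T -> idealL k I ->
  fplus (\1_I : L T -> R) = (\1_(Lplus I) : gS T -> R) /\ idealS k (Lplus I).
Proof.
move=> _ _ [[A IA] [Iadd Imul]].
have I0 : Lplus I (zeroS T).
  move=> g; case: k Imul => [[Hl _]|Hl|Hr].
  - by rewrite -(mulL0 A g); apply: Hl.
  - by rewrite -(mulL0 A g); apply: Hl.
  - by rewrite -(mul0L A g); apply: Hr.
split.
  apply: funext => x; rewrite /fplus indicE.
  case: (boolP (x \in Lplus I)) => hx.
    have hx' := set_mem hx.
    have -> : [set (\1_I : L T -> R) (br x g) | g in [set: gG T]] = [set 1].
      apply/seteqP; split => y /=.
        by case=> g _ <-; rewrite indicE (mem_set (hx' g)).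
      by move=> ->; exists (zeroG T) => //; rewrite indicE (mem_set (hx' _)).
    by rewrite inf1.
  have [g hg] : exists g, ~ I (br x g).
    apply/not_existsP => h; move/negP: hx; apply; apply/mem_set => g.
    by have := h g => /contrapT.
  have lb : lbound [set (\1_I : L T -> R) (br x g) | g in [set: gG T]] 0.
    move=> y [g' _ <-]; rewrite indicE; exact: ler0n.
  have hl : has_lbound [set (\1_I : L T -> R) (br x g) | g in [set: gG T]].
    by exists 0.
  set E := [set (\1_I : L T -> R) (br x g) | g in [set: gG T]].
  have h1 : inf E <= 0.
    apply: (ge_inf hl); exists g => //; rewrite indicE memNset //.
  have h2 : 0 <= inf E.
    apply: lb_le_inf => //.
    by exists ((\1_I : L T -> R) (br x g)), g.
  by apply/eqP; rewrite eq_le h1 h2.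
split; first by exists (zeroS T).
split.
  by move=> a b ha hb g; rewrite -addL_br; apply: Iadd.
case: k Imul => [[Hl Hr]|Hl|Hr].
- split.
    by move=> x g a ha d; rewrite -mulL_br; apply: Hl.
  by move=> x g a ha d; rewrite -mulL_br; apply: Hr.
- by move=> x g a ha d; rewrite -mulL_br; apply: Hl.
- by move=> x g a ha d; rewrite -mulL_br; apply: Hr.
Qed.
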